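(* If $p\in I(f)$ then $p$ is a quasi-homogeneous singularity of $\eta$.
   Context: Let $n=3$. Let $f:\mathbb P^3\dashrightarrow\mathbb P^2$, $f=(F_0:F_1:F_2^\gamma)$ with $F_0,F_1,F_2$ homogeneous without common factors, $\deg F_0=\deg F_1=\gamma\deg F_2=\nu\geq 2$, $\gamma\geq 2$, be generic, i.e. $dF_0\wedge dF_1\wedge dF_2\neq 0$ at every point of $\tilde f^{-1}(0)\setminus\{0\}$ ($\tilde f$ the lift to $\mathbb C^{4}$); $I(f)=\Pi(\tilde f^{-1}(0))$ is its indeterminacy locus. Let $\mathcal G$ be a foliation of degree $d\geq 2$ on $\mathbb P^2$ leaving the line $Z=0$ invariant, defined by $ZA\,dX+ZB\,dY+C\,dZ$ with $XA+YB+C=0$, all of whose singularities are nondegenerate with nonreal characteristic numbers, whose only algebraic invariant curve is that line, and such that $\mathrm{Sing}(\mathcal G)$ does not meet $Y_2(f)=\Pi_2[\tilde f\{w: dF_0\wedge dF_1\wedge dF_2(w)=0\}]$. Let $\mathcal F=f^*\mathcal G$. Near $p\in I(f)$ there is a local chart $(x_0,x_1,x_2)$ with $\tilde f=(x_0,x_1,x_2^\gamma)$, in which $\mathcal F$ is represented by $\eta=x_2A(x_0,x_1,x_2^\gamma)dx_0+x_2B(x_0,x_1,x_2^\gamma)dx_1+\gamma C(x_0,x_1,x_2^\gamma)dx_2$. A point $p$ is a quasi-homogeneous singularity of an integrable $1$-form $\omega$ on a neighborhood of $p\in\mathbb C^3$ if, writing $d\omega=i_{\mathcal Z}\mu$ for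 a holomorphic $3$-form $\mu$ with $\mu(p)\neq 0$ and holomorphic vector field $\mathcal Z$, $p$ is an isolated singularity of $\mathcal Z$ and all eigenvalues of $D\mathcal Z(p)$ are zero. *)

(* Defs.v *)
From HB Require Import structures.
From mathcomp Require Import all_boot all_order all_algebra.
From mathcomp Require Import complex.
From mathcomp Require Import reals.
From mathcomp Require Import mpoly.

Set Implicit Arguments.
Unset Strict Implicit.
Unset Printing Implicit Defensive.

Import Order.TTheory GRing.Theory Num.Theory.
Local Open Scope ring_scope.

Section Defs.
Variable C : numClosedFieldType.

Definition mdvd n (H P : {mpoly C[n]}) : Prop := exists Q, P = H * Q.

Definition mconst n (H : {mpoly C[n]}) : Prop := (msize H <= 1)%N.

Definition mirreducible n (F : {mpoly C[n]}) : Prop :=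
  ~ mconst F /\ forall G H : {mpoly C[n]}, F = G * H -> mconst G \/ mconst H.

Definition pt3 (a b c : C) : 'I_3 -> C := fun i => nth 0 [:: a; b; c] i.

Definition ftilde (gamma : nat) (F0 F1 F2 : {mpoly C[4]}) (w : 'I_4 -> C)
  : 'I_3 -> C := pt3 F0.@[w] F1.@[w] (F2.@[w] ^+ gamma).

(* Jacobian matrix of (F0,F1,F2) at w; dF0/\dF1/\dF2 (w) <> 0 iff its rows
   are linearly independent *)
Definition jacF (F0 F1 F2 : {mpoly C[4]}) (w : 'I_4 -> C) : 'M[C]_(3, 4) :=
  \matrix_(i < 3, j < 4) (nth 0 [:: F0; F1; F2] i)^`M(j).@[w].

Definition nonzero_pt n (v : 'I_n -> C) : Prop := exists i, v i != 0.

(* coefficients of the homogeneous 1-form; variables X,Y,Z = x_0,x_1,x_2 *)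
Definition omG (A B Cc : {mpoly C[3]}) (i : 'I_3) : {mpoly C[3]} :=
  nth 0 [:: 'X_(inord 2) * A; 'X_(inord 2) * B; Cc] i.

Definition singG (A B Cc : {mpoly C[3]}) (q : 'I_3 -> C) : Prop :=
  nonzero_pt q /\ forall i, (omG A B Cc i).@[q] = 0.

(* affine chart {x_k = 1} of P^2, with affine coordinates x_a, x_b (a < b) *)
Definition chart_a (k : 'I_3) : 'I_3 := if k == 0 :> nat then inord 1 else inord 0.
Definition chart_b (k : 'I_3) : 'I_3 := if k == 2 :> nat then inord 1 else inord 2.

(* linear part at q (with q k <> 0) of the vector field (om_b, -om_a) defining
   G in the affine chart x_k = 1 (restriction of the 1-form: om_a dx_a + om_b dx_b) *)
Definition lin_part (om : 'I_3 -> {mpoly C[3]}) (k : 'I_3) (q : 'I_3 -> C)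
  : 'M[C]_2 :=
  let a := chart_a k in let b := chart_b k in
  let v := fun i => q i / q k in
  \matrix_(i < 2, j < 2)
     (let c := if j == 0 :> nat then a else b in
      if i == 0 :> nat then (om b)^`M(c).@[v] else - (om a)^`M(c).@[v]).

Definition nondeg_nonreal (J : 'M[C]_2) : Prop :=
  \det J != 0 /\
  exists l1 l2, [/\ eigenvalue J l1, eigenvalue J l2, l1 != 0, l2 != 0
                  & l1 / l2 \notin Num.real].

(* F (homogeneous) defines a G-invariant curve: F divides om /\ dF *)
Definition invariant_curve (om : 'I_3 -> {mpoly C[3]}) (F : {mpoly C[3]}) : Prop :=
  forall i j : 'I_3, mdvd F (om i * F^`M(j) - om j * F^`M(i)).

(* d eta, as the coefficients of dx1/\dx2, dx0/\dx2, dx0/\dx1 *)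
Definition d1form (eta : 'I_3 -> {mpoly C[3]}) : 'I_3 -> {mpoly C[3]} :=
  fun k => nth 0
   [:: (eta (inord 2))^`M(inord 1) - (eta (inord 1))^`M(inord 2);
       (eta (inord 2))^`M(inord 0) - (eta (inord 0))^`M(inord 2);
       (eta (inord 1))^`M(inord 0) - (eta (inord 0))^`M(inord 1)] k.

(* i_Z mu for mu = h dx0/\dx1/\dx2, same basis as above *)
Definition contr (h : {mpoly C[3]}) (Z : 'I_3 -> {mpoly C[3]}) : 'I_3 -> {mpoly C[3]} :=
  fun k => nth 0 [:: h * Z (inord 0); - (h * Z (inord 1)); h * Z (inord 2)] k.

(* eta /\ d eta = 0 (coefficient of dx0/\dx1/\dx2) *)
Definition integrable (eta : 'I_3 -> {mpoly C[3]}) : Prop :=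
  eta (inord 0) * d1form eta (inord 0) - eta (inord 1) * d1form eta (inord 1)
  + eta (inord 2) * d1form eta (inord 2) = 0.

Definition origin3 : 'I_3 -> C := fun _ => 0.

Definition isolated_zero (Z : 'I_3 -> {mpoly C[3]}) : Prop :=
  (forall i, (Z i).@[origin3] = 0) /\
  exists eps : C, 0 < eps /\
    forall x : 'I_3 -> C, (forall i, `|x i| < eps) ->
      (forall i, (Z i).@[x] = 0) -> forall i, x i = 0.

Definition DZ0 (Z : 'I_3 -> {mpoly C[3]}) : 'M[C]_3 :=
  \matrix_(i < 3, j < 3) (Z i)^`M(j).@[origin3].

(* the origin is a quasi-homogeneous singularity of the integrable 1-form eta:
   d eta = i_Z mu with mu = dx0/\dx1/\dx2 (mu(0) <> 0), the origin is an
   isolated zero of Z and all eigenvalues of DZ(0) vanish *)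
Definition qh_singularity (eta : 'I_3 -> {mpoly C[3]}) : Prop :=
  integrable eta /\
  exists Z : 'I_3 -> {mpoly C[3]},
    [/\ d1form eta = contr 1 Z, isolated_zero Z
      & forall a, eigenvalue (DZ0 Z) a -> a = 0].

Definition subst_g (gamma : nat) : 3.-tuple {mpoly C[3]} :=
  [tuple 'X_(inord 0); 'X_(inord 1); 'X_(inord 2) ^+ gamma].

Definition eta_form (gamma : nat) (A B Cc : {mpoly C[3]}) : 'I_3 -> {mpoly C[3]} :=
  fun k => nth 0
   [:: 'X_(inord 2) * (A \mPo subst_g gamma);
       'X_(inord 2) * (B \mPo subst_g gamma);
       gamma%:R *: (Cc \mPo subst_g gamma)] k.

End Defs.

(* Main.v *)
Require Import Defs.
From HB Require Import structures.
From mathcomp Require Import all_boot all_order all_algebra.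
From mathcomp Require Import mpoly.
From mathcomp Require Import ring.
From mathcomp Require Import complex reals.
From Stdlib Require Import FunctionalExtensionality.
Import Order.TTheory GRing.Theory Num.Theory.
Local Open Scope ring_scope.

Section S.
Variable K : comNzRingType.
Variable n : nat.
Implicit Types p q : {mpoly K[n]}.

Lemma mderivXU (i j : 'I_n) : ('X_i : {mpoly K[n]})^`M(j) = (i == j)%:R.
Proof.
rewrite mderivX mnm1E; case: eqP => [->|_]; last by rewrite scale0r.
by rewrite -{1}[U_(j)%MM]add0m addmK mpolyX0 scale1r.
Qed.

Lemma mderivXn j p k : (p ^+ k.+1)^`M(j) = (p^`M(j) * p ^+ k) *+ k.+1.
Proof.
elim: k => [|k IH]; first by rewrite expr1 expr0 mulr1.
rewrite exprS mderivM IH. rewrite !exprS. ring.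
Qed.
End S.

Section Chain.
Variable K : comNzRingType.
Variables n k : nat.
Variable lq : n.-tuple {mpoly K[k]}.
Implicit Types p q : {mpoly K[n]}.

Lemma submm' (m : 'X_{1..n}) : (m - m = 0)%MM.
Proof. by apply/mnmP => i; rewrite mnmBE subnn mnm0E. Qed.

Definition CR p := forall j, (p \mPo lq)^`M(j) =
  \sum_(i < n) (p^`M(i) \mPo lq) * (tnth lq i)^`M(j).

Lemma CR_add p q : CR p -> CR q -> CR (p + q).
Proof.
move=> hp hq j; rewrite raddfD /= mderivD hp hq -big_split /=.
by apply: eq_bigr => i _; rewrite mderivD raddfD /= mulrDl.
Qed.

Lemma CR_scale c p : CR p -> CR (c *: p).
Proof.
move=> hp j; rewrite comp_mpolyZ mderivZ hp scaler_sumr.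
by apply: eq_bigr => i _; rewrite mderivZ comp_mpolyZ scalerAl.
Qed.

Lemma CR_0 : CR 0.
Proof. by move=> j; rewrite comp_mpoly0 mderiv0 big1 // => i _; rewrite mderiv0 comp_mpoly0 mul0r. Qed.

Lemma CR_1 : CR 1.
Proof.
move=> j; rewrite rmorph1 -mpolyC1 mderivC big1 // => i _.
by rewrite mderivC comp_mpoly0 mul0r.
Qed.

Lemma CR_mul p q : CR p -> CR q -> CR (p * q).
Proof.
move=> hp hq j; rewrite rmorphM mderivM hp hq mulr_suml mulr_sumr -big_split /=.
apply: eq_bigr => i _; rewrite mderivM rmorphD !rmorphM /=. ring.
Qed.

Lemma CR_X (l : 'I_n) : CR 'X_l.
Proof.
move=> j; rewrite comp_mpolyXU (bigD1 l) //= big1 ?addr0.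
  by rewrite mderivX mnm1E eqxx submm' mpolyX0 scale1r rmorph1 mul1r (tnth_nth 0).
move=> i /negbTE hi; rewrite mderivX mnm1E eq_sym hi scale0r comp_mpoly0 mul0r //.
Qed.

Lemma CR_exp p e : CR p -> CR (p ^+ e).
Proof. move=> hp; elim: e => [|e IH]; [exact: CR_1 | rewrite exprS; exact: CR_mul]. Qed.

Lemma chain p : CR p.
Proof.
rewrite [p]mpolyE; elim: (msupp p) => [|m s IH]; first by rewrite big_nil; exact: CR_0.
rewrite big_cons; apply: CR_add => //; apply: CR_scale.
rewrite mpolyXE_id; apply: (big_ind CR); [exact: CR_1 | exact: CR_mul|].
move=> i _; exact/CR_exp/CR_X.
Qed.
End Chain.
Section Homog.
Variable K : comNzRingType.
Variable n : nat.
Implicit Types p q : {mpoly K[n]}.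

Lemma euler_mon (m : 'X_{1..n}) :
  \sum_(i < n) 'X_i * ('X_[m] : {mpoly K[n]})^`M(i) = 'X_[m] *+ mdeg m.
Proof.
rewrite mdegE -sumrMnr; apply: eq_bigr => i _.
rewrite mderivX -scalerAr -mpolyXD.
case: (posnP (m i)) => [->|hi]; first by rewrite scale0r mulr0n.
rewrite addmC submK; last first.
  by apply/mnm_lepP => l; rewrite mnm1E; case: eqP => [<-|]; [exact: hi|].
by rewrite scaler_nat.
Qed.

Lemma euler d p : p \is d.-homog -> \sum_(i < n) 'X_i * p^`M(i) = p *+ d.
Proof.
move=> /dhomogP hp.
transitivity (\sum_(i < n) \sum_(m <- msupp p) 'X_i * (p@_m *: 'X_[m])^`M(i)).
  apply: eq_bigr => i _; rewrite {1}[p]mpolyE raddf_sum mulr_sumr //.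
rewrite {3}[p]mpolyE -sumrMnl.
rewrite exchange_big /=; apply: eq_big_seq => m hm.
rewrite -(hp m hm) scalerMnr -euler_mon scaler_sumr; apply: eq_bigr => i _.
by rewrite mderivZ scalerAr.
Qed.

Lemma scale_eval d p (c : K) (x : 'I_n -> K) : p \is d.-homog ->
  p.@[fun i => c * x i] = c ^+ d * p.@[x].
Proof.
move=> /dhomogP hp; rewrite !mevalE mulr_sumr; apply: eq_big_seq => m hm.
rewrite mulrCA; congr (_ * _).
rewrite -(hp m hm) /= mdegE -prodrXr -big_split /=; apply: eq_bigr => i _.
by rewrite exprMn.
Qed.

Lemma homog_eval0 d p : p \is d.-homog -> (0 < d)%N -> p.@[fun _ => 0] = 0.
Proof.
move=> hp hd; have := @scale_eval d p 0 (fun _ => 0) hp.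
rewrite expr0n gtn_eqF // => h.
transitivity (p.@[fun i : 'I_n => 0 * 0]); first by apply: meval_eq => i; rewrite mul0r.
by rewrite h mul0r.
Qed.

Lemma mderiv_homog d p i : p \is d.-homog -> p^`M(i) \is d.-1.-homog.
Proof.
move=> /dhomogP hp; apply/dhomogP => m.
rewrite mcoeff_msupp mcoeff_mderiv => h.
have: p@_(m + U_(i)) != 0 by apply: contra h => /eqP ->; rewrite mul0rn.
rewrite -mcoeff_msupp => /hp /=; rewrite mdegD mdeg1 => <-.
by rewrite addn1.
Qed.
End Homog.
Section Mx.
Variable C : numClosedFieldType.

Lemma eig2 (J : 'M[C]_2) l : eigenvalue J l -> exists v0 v1 : C,
  [/\ v0 != 0 \/ v1 != 0, v0 * J 0 0 + v1 * J 1 0 = l * v0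
    & v0 * J 0 1 + v1 * J 1 1 = l * v1].
Proof.
have e0 : (ord0 : 'I_2) = 0 by apply: val_inj.
have e1 : (lift ord0 ord0 : 'I_2) = 1 by apply: val_inj.
case/eigenvalueP => v hv nz; exists (v 0 0), (v 0 1); split.
- case: (eqVneq (v 0 0) 0) => h0; last by left.
  case: (eqVneq (v 0 1) 0) => h1; last by right.
  case/negP: nz; apply/eqP/rowP => j; rewrite mxE.
  by case: j => [[|[|//]]] hj; [rewrite -h0 | rewrite -h1]; congr (v 0 _); apply: val_inj.
- by have := congr1 (fun M : 'rV[C]_2 => M 0 0) hv; rewrite !mxE !big_ord_recl big_ord0 addr0 e0 e1.
- by have := congr1 (fun M : 'rV[C]_2 => M 0 1) hv; rewrite !mxE !big_ord_recl big_ord0 addr0 e0 e1.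
Qed.

Lemma real_pm1 (z : C) : z ^+ 2 = 1 -> z \is Num.real.
Proof.
move=> h; have : (z - 1) * (z + 1) = 0 by rewrite -subr_sqr h expr1n subrr.
move/eqP; rewrite mulf_eq0 => /orP [].
  by rewrite subr_eq0 => /eqP ->; exact: real1.
by rewrite addr_eq0 => /eqP ->; rewrite realN real1.
Qed.

Lemma trace0_not (J : 'M[C]_2) : J 0 0 + J 1 1 = 0 -> ~ nondeg_nonreal J.
Proof.
move=> ht [_ [l1 [l2 [e1 e2 n1 n2 nr]]]].
have hJ : J 0 0 = - J 1 1 by apply/eqP; rewrite -addr_eq0 ht.
have key : forall l, eigenvalue J l -> l ^+ 2 = J 1 1 ^+ 2 + J 0 1 * J 1 0.
  move=> l /eig2 [v0 [v1 [nz h1 h2]]].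
  have E1 : v0 * J 0 0 + v1 * J 1 0 - l * v0 = 0 by rewrite h1 subrr.
  have E2 : v0 * J 0 1 + v1 * J 1 1 - l * v1 = 0 by rewrite h2 subrr.
  apply/eqP; rewrite -subr_eq0; apply/eqP.
  case: nz => nz.
    apply: (mulIf nz); rewrite mul0r.
    have -> : (l ^+ 2 - (J 1 1 ^+ 2 + J 0 1 * J 1 0)) * v0 =
      - (l - J 1 1) * (v0 * J 0 0 + v1 * J 1 0 - l * v0)
      - J 1 0 * (v0 * J 0 1 + v1 * J 1 1 - l * v1) by rewrite hJ; ring.
    by rewrite E1 E2 !mulr0 subrr.
  apply: (mulIf nz); rewrite mul0r.
  have -> : (l ^+ 2 - (J 1 1 ^+ 2 + J 0 1 * J 1 0)) * v1 =
    - (l + J 1 1) * (v0 * J 0 1 + v1 * J 1 1 - l * v1)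
    - J 0 1 * (v0 * J 0 0 + v1 * J 1 0 - l * v0) by rewrite hJ; ring.
  by rewrite E1 E2 !mulr0 subrr.
move/negP: nr; apply; apply: real_pm1.
by rewrite expr_div_n (key _ e1) (key _ e2) divff // -(key _ e2) expf_neq0.
Qed.

Lemma tri_not (J : 'M[C]_2) (g : nat) :
  J 1 0 = 0 -> J 1 1 = - (g%:R * J 0 0) -> ~ nondeg_nonreal J.
Proof.
move=> h10 h11 [_ [l1 [l2 [e1 e2 n1 n2 nr]]]].
have key : forall l, eigenvalue J l -> exists2 r, r \is Num.real & l = r * J 0 0.
  move=> l /eig2 [v0 [v1 [nz h1 h2]]].
  rewrite h10 mulr0 addr0 in h1; rewrite h11 in h2.
  case: (eqVneq v0 0) => [z0|nz0].
    rewrite z0 mul0r add0r in h2; case: nz; first by rewrite z0 eqxx.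
    move=> nz1; exists (- g%:R); first by rewrite realN realn.
    by apply: (mulIf nz1); rewrite -h2; ring.
  exists 1; first exact: real1.
  by apply: (mulfI nz0); rewrite mul1r [v0 * l]mulrC -h1.
have [r1 hr1 el1] := key _ e1; have [r2 hr2 el2] := key _ e2.
rewrite el1 el2 in nr; rewrite el2 in n2; have c0 : J 0 0 != 0 by apply: contra n2 => /eqP ->; rewrite mulr0.
have r20 : r2 != 0 by apply: contra n2 => /eqP ->; rewrite mul0r.
move/negP: nr; apply; rewrite (_ : _ / _ = r1 / r2); first by rewrite rpred_div.
by field; rewrite c0 r20.
Qed.
End Mx.

Local Notation o0 := (inord 0 : 'I_3).
Local Notation o1 := (inord 1 : 'I_3).
Local Notation o2 := (inord 2 : 'I_3).

Lemma v0 : (o0 : nat) = 0%N. Proof. by rewrite inordK. Qed.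
Lemma v1 : (o1 : nat) = 1%N. Proof. by rewrite inordK. Qed.
Lemma v2 : (o2 : nat) = 2%N. Proof. by rewrite inordK. Qed.
Lemma e01 : (o0 == o1) = false. Proof. by rewrite -val_eqE /= v0 v1. Qed.
Lemma e02 : (o0 == o2) = false. Proof. by rewrite -val_eqE /= v0 v2. Qed.
Lemma e12 : (o1 == o2) = false. Proof. by rewrite -val_eqE /= v1 v2. Qed.
Lemma e10 : (o1 == o0) = false. Proof. by rewrite eq_sym e01. Qed.
Lemma e20 : (o2 == o0) = false. Proof. by rewrite eq_sym e02. Qed.
Lemma e21 : (o2 == o1) = false. Proof. by rewrite eq_sym e12. Qed.

Lemma sum3 (V : nmodType) (F : 'I_3 -> V) :
  \sum_(i < 3) F i = F o0 + F o1 + F o2.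
Proof.
rewrite !big_ord_recr big_ord0 /= add0r; congr (F _ + F _ + F _); apply: val_inj => /=;
 by rewrite inordK.
Qed.

Lemma n00 : ((0 : 'I_2) == 0 :> nat) = true. Proof. by []. Qed.
Lemma n10 : ((1 : 'I_2) == 0 :> nat) = false. Proof. by []. Qed.
Lemma ca0 : chart_a o0 = o1. Proof. by rewrite /chart_a v0. Qed.
Lemma cb0 : chart_b o0 = o2. Proof. by rewrite /chart_b v0. Qed.
Lemma ca1 : chart_a o1 = o0. Proof. by rewrite /chart_a v1. Qed.
Lemma cb1 : chart_b o1 = o2. Proof. by rewrite /chart_b v1. Qed.
Lemma ca2 : chart_a o2 = o0. Proof. by rewrite /chart_a v2. Qed.
Lemma cb2 : chart_b o2 = o1. Proof. by rewrite /chart_b v2. Qed.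

Section Main.
Variable C : numClosedFieldType.
Variable g : nat.
Local Notation t := (subst_g C g.+1).
Local Notation X0 := ('X_o0 : {mpoly C[3]}).
Local Notation X1 := ('X_o1 : {mpoly C[3]}).
Local Notation X2 := ('X_o2 : {mpoly C[3]}).
Implicit Types p q : {mpoly C[3]}.

Lemma tn0 : tnth t o0 = X0. Proof. by rewrite (tnth_nth 0) v0. Qed.
Lemma tn1 : tnth t o1 = X1. Proof. by rewrite (tnth_nth 0) v1. Qed.
Lemma tn2 : tnth t o2 = X2 ^+ g.+1. Proof. by rewrite (tnth_nth 0) v2. Qed.

Lemma dcomp p j : (p \mPo t)^`M(j) = (p^`M(o0) \mPo t) * X0^`M(j)
  + (p^`M(o1) \mPo t) * X1^`M(j) + (p^`M(o2) \mPo t) * (X2 ^+ g.+1)^`M(j).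
Proof. by rewrite chain sum3 tn0 tn1 tn2. Qed.

Lemma d0 p : (p \mPo t)^`M(o0) = p^`M(o0) \mPo t.
Proof. by rewrite dcomp mderivXn !mderivXU eqxx e10 e20 /=; ring. Qed.
Lemma d1 p : (p \mPo t)^`M(o1) = p^`M(o1) \mPo t.
Proof. by rewrite dcomp mderivXn !mderivXU eqxx e01 e21 /=; ring. Qed.
Lemma d2 p : (p \mPo t)^`M(o2) = (p^`M(o2) \mPo t) * (X2 ^+ g *+ g.+1).
Proof. by rewrite dcomp mderivXn !mderivXU eqxx e02 e12 /=; ring. Qed.

Variables A B Cc : {mpoly C[3]}.
Local Notation eta := (eta_form g.+1 A B Cc).

Lemma eta0 : eta o0 = X2 * (A \mPo t). Proof. by rewrite /eta_form v0. Qed.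
Lemma eta1 : eta o1 = X2 * (B \mPo t). Proof. by rewrite /eta_form v1. Qed.
Lemma eta2 : eta o2 = (Cc \mPo t) *+ g.+1. Proof. by rewrite /eta_form v2 scaler_nat. Qed.

Lemma LD0 : d1form eta o0 = (Cc^`M(o1) \mPo t) *+ g.+1 - (B \mPo t)
   - X2 * (B^`M(o2) \mPo t) * X2 ^+ g *+ g.+1.
Proof.
rewrite /d1form v0 /= eta1 eta2 mderivMn mderivM d1 d2 !mderivXU ?eqxx ?e21 /=; ring.
Qed.
Lemma LD1 : d1form eta o1 = (Cc^`M(o0) \mPo t) *+ g.+1 - (A \mPo t)
   - X2 * (A^`M(o2) \mPo t) * X2 ^+ g *+ g.+1.
Proof.
rewrite /d1form v1 /= eta0 eta2 mderivMn mderivM d0 d2 !mderivXU ?eqxx ?e20 /=; ring.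
Qed.
Lemma LD2 : d1form eta o2 = X2 * (B^`M(o0) \mPo t) - X2 * (A^`M(o1) \mPo t).
Proof.
rewrite /d1form v2 /= eta0 eta1 !mderivM d0 d1 !mderivXU ?e20 ?e21 /=; ring.
Qed.

Variable d : nat.
Hypotheses (hA : A \is d.-homog) (hB : B \is d.-homog) (hC : Cc \is d.+1.-homog)
  (hEuler : X0 * A + X1 * B + Cc = 0).

Lemma hXp : A + X0 * A^`M(o0) + X1 * B^`M(o0) + Cc^`M(o0) = 0.
Proof.
have := congr1 (mderiv o0) hEuler.
rewrite mderiv0 !mderivD !mderivM !mderivXU eqxx e10 /= => <-; ring.
Qed.
Lemma hYp : X0 * A^`M(o1) + B + X1 * B^`M(o1) + Cc^`M(o1) = 0.
Proof.
have := congr1 (mderiv o1) hEuler.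
rewrite mderiv0 !mderivD !mderivM !mderivXU eqxx e01 /= => <-; ring.
Qed.
Lemma eAp : X0 * A^`M(o0) + X1 * A^`M(o1) + X2 * A^`M(o2) = A *+ d.
Proof. by rewrite -(@euler _ _ _ _ hA) sum3. Qed.
Lemma eBp : X0 * B^`M(o0) + X1 * B^`M(o1) + X2 * B^`M(o2) = B *+ d.
Proof. by rewrite -(@euler _ _ _ _ hB) sum3. Qed.
Lemma eCp : X0 * Cc^`M(o0) + X1 * Cc^`M(o1) + X2 * Cc^`M(o2) = Cc *+ d.+1.
Proof. by rewrite -(@euler _ _ _ _ hC) sum3. Qed.

Lemma E0 : A * Cc^`M(o1) - X2 * A * B^`M(o2) - B * Cc^`M(o0) + X2 * B * A^`M(o2)
   + Cc * B^`M(o0) - Cc * A^`M(o1) = 0.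
Proof.
have -> : A * Cc^`M(o1) - X2 * A * B^`M(o2) - B * Cc^`M(o0) + X2 * B * A^`M(o2)
   + Cc * B^`M(o0) - Cc * A^`M(o1) =
   A * (X0 * A^`M(o1) + B + X1 * B^`M(o1) + Cc^`M(o1))
 - B * (A + X0 * A^`M(o0) + X1 * B^`M(o0) + Cc^`M(o0))
 + (B^`M(o0) - A^`M(o1)) * (X0 * A + X1 * B + Cc)
 + B * (X0 * A^`M(o0) + X1 * A^`M(o1) + X2 * A^`M(o2) - A *+ d)
 - A * (X0 * B^`M(o0) + X1 * B^`M(o1) + X2 * B^`M(o2) - B *+ d) by ring.
by rewrite hXp hYp eAp eBp hEuler !(subrr, mulr0, subr0, addr0).
Qed.

Lemma integ : integrable eta.
Proof.
rewrite /integrable eta0 eta1 eta2 LD0 LD1 LD2.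
have := congr1 (comp_mpoly t) E0.
rewrite rmorph0 !rmorphD !rmorphN !rmorphM /= !comp_mpolyXU v2 /=.
move/(congr1 (fun z => X2 *+ g.+1 * z)); rewrite mulr0 => H.
rewrite exprS in H; rewrite -H; ring.
Qed.

Local Notation O := (origin3 C).
Lemma evX (x : 'I_3 -> C) i : ('X_i : {mpoly C[3]}).@[x] = x i.
Proof. exact: mevalXU. Qed.
Definition Pt (x : 'I_3 -> C) := fun i : 'I_3 => (tnth t i).@[x].
Lemma compP p x : (p \mPo t).@[x] = p.@[Pt x].
Proof. exact: comp_mpoly_meval. Qed.
Lemma Pt0 x : Pt x o0 = x o0. Proof. by rewrite /Pt tn0 evX. Qed.
Lemma Pt1 x : Pt x o1 = x o1. Proof. by rewrite /Pt tn1 evX. Qed.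
Lemma Pt2 x : Pt x o2 = x o2 ^+ g.+1. Proof.
rewrite /Pt tn2; elim: g.+1 => [|k IH]; first by rewrite !expr0 meval1.
by rewrite !exprS mevalM IH evX.
Qed.

Lemma ord_cases (P : 'I_3 -> Prop) : P o0 -> P o1 -> P o2 -> forall i, P i.
Proof.
move=> h0 h1 h2 [[|[|[|//]]] hi].
- by have -> : Ordinal hi = o0 by apply: val_inj; rewrite /= v0.
- by have -> : Ordinal hi = o1 by apply: val_inj; rewrite /= v1.
- by have -> : Ordinal hi = o2 by apply: val_inj; rewrite /= v2.
Qed.

Lemma PtO : Pt O =1 O.
Proof.
apply: ord_cases; rewrite ?Pt0 ?Pt1 ?Pt2 //.
by rewrite /origin3 expr0n.
Qed.

Lemma compO p : (p \mPo t).@[O] = p.@[O].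
Proof. by rewrite compP; apply: meval_eq; exact: PtO. Qed.

Lemma homogO e p : p \is e.-homog -> (0 < e)%N -> p.@[O] = 0.
Proof. exact: homog_eval0. Qed.

Definition ord2 p := p.@[O] = 0 /\ forall j, p^`M(j).@[O] = 0.

Lemma ord2D p q : ord2 p -> ord2 q -> ord2 (p + q).
Proof. by move=> [h1 h2] [h3 h4]; split => [|j]; rewrite ?mderivD mevalD ?h1 ?h2 ?h3 ?h4 addr0. Qed.
Lemma ord2N p : ord2 p -> ord2 (- p).
Proof. by move=> [h1 h2]; split => [|j]; rewrite ?mderivN mevalN ?h1 ?h2 oppr0. Qed.
Lemma ord2B p q : ord2 p -> ord2 q -> ord2 (p - q).
Proof. by move=> h1 h2; apply: ord2D => //; exact: ord2N. Qed.
Lemma ord2Mn p k : ord2 p -> ord2 (p *+ k).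
Proof. by move=> [h1 h2]; split => [|j]; rewrite ?mderivMn mevalMn ?h1 ?h2 mul0rn. Qed.
Lemma ord2Ml p q : ord2 p -> ord2 (p * q).
Proof. by move=> [h1 h2]; split => [|j]; rewrite ?mderivM ?mevalD !mevalM ?h1 ?h2 !mul0r ?mulr0 ?addr0. Qed.
Lemma ord2Mr p q : ord2 p -> ord2 (q * p).
Proof. by rewrite mulrC; exact: ord2Ml. Qed.
Lemma ord2M00 p q : p.@[O] = 0 -> q.@[O] = 0 -> ord2 (p * q).
Proof. by move=> h1 h2; split => [|j]; rewrite ?mderivM ?mevalD !mevalM ?h1 ?h2 !mul0r ?mulr0 ?addr0. Qed.

Lemma ord2_comp e p : p \is e.-homog -> (1 < e)%N -> ord2 (p \mPo t).
Proof.
move=> hp he; split => [|j]; first by rewrite compO (@homogO _ _ hp) // ltnW.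
have hi : forall i, (p^`M(i) \mPo t).@[O] = 0.
  move=> i; rewrite compO (@homogO _ _ (@mderiv_homog _ _ _ _ i hp)) //.
  by case: e he {hp} => [|[|e]].
by rewrite dcomp !mevalD !mevalM !hi !mul0r !addr0.
Qed.

Lemma X2O : X2.@[O] = 0. Proof. by rewrite evX. Qed.

Hypothesis hd : (1 < d)%N.

Definition Zv := fun k : 'I_3 => nth 0 [:: d1form eta o0; - d1form eta o1; d1form eta o2] k.
Lemma Zv0 : Zv o0 = d1form eta o0. Proof. by rewrite /Zv v0. Qed.
Lemma Zv1 : Zv o1 = - d1form eta o1. Proof. by rewrite /Zv v1. Qed.
Lemma Zv2 : Zv o2 = d1form eta o2. Proof. by rewrite /Zv v2. Qed.

Lemma contrZ : d1form eta = contr 1 Zv.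
Proof.
apply: functional_extensionality; apply: ord_cases;
  rewrite /contr ?v0 ?v1 ?v2 /= ?Zv0 ?Zv1 ?Zv2 ?v0 ?v1 ?v2 /= ?mul1r ?opprK //.
Qed.

Lemma compO0 e p : p \is e.-homog -> (0 < e)%N -> (p \mPo t).@[O] = 0.
Proof. by move=> hp he; rewrite compO (@homogO _ _ hp). Qed.

Lemma ord2Zv : forall i, ord2 (Zv i).
Proof.
have hd1 : (0 < d.-1)%N by case: d hd => [|[|]].
have hd0 : (0 < d)%N by case: d hd => [|[|]].
apply: ord_cases; rewrite ?Zv0 ?Zv1 ?Zv2 ?LD0 ?LD1 ?LD2.
- apply: ord2B; [apply: ord2B|].
  + by apply: ord2Mn; apply: (@ord2_comp d) => //; exact: (@mderiv_homog _ _ _ _ o1 hC).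
  + exact: (@ord2_comp d).
  + apply: ord2Mn; apply: ord2Ml; apply: ord2M00; first exact: X2O.
    by apply: (@compO0 d.-1) => //; apply: (@mderiv_homog _ _ _ _ o2 hB).
- apply: ord2N; apply: ord2B; [apply: ord2B|].
  + by apply: ord2Mn; apply: (@ord2_comp d) => //; exact: (@mderiv_homog _ _ _ _ o0 hC).
  + exact: (@ord2_comp d).
  + apply: ord2Mn; apply: ord2Ml; apply: ord2M00; first exact: X2O.
    by apply: (@compO0 d.-1) => //; apply: (@mderiv_homog _ _ _ _ o2 hA).
- apply: ord2B; apply: ord2M00; rewrite ?X2O //.
  + by apply: (@compO0 d.-1) => //; apply: (@mderiv_homog _ _ _ _ o0 hB).
  + by apply: (@compO0 d.-1) => //; apply: (@mderiv_homog _ _ _ _ o1 hA).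
Qed.

Lemma DZ0_eig a : eigenvalue (DZ0 Zv) a -> a = 0.
Proof.
have -> : DZ0 Zv = 0.
  by apply/matrixP => i j; rewrite !mxE; case: (ord2Zv i) => _ ->.
case/eigenvalueP => v; rewrite mulmx0 => /esym/eqP; rewrite scaler_eq0.
by case/orP => [/eqP //|->].
Qed.

Lemma X2n (x : 'I_3 -> C) k : (X2 ^+ k).@[x] = x o2 ^+ k.
Proof. by elim: k => [|k IH]; rewrite ?expr0 ?meval1 // !exprS mevalM IH evX. Qed.

Hypothesis hsing : forall q : 'I_3 -> C, singG A B Cc q ->
  forall k : 'I_3, q k != 0 -> nondeg_nonreal (lin_part (omG A B Cc) k q).

Section Iso.
Variable x : 'I_3 -> C.
Hypothesis hz : forall i, (Zv i).@[x] = 0.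
Local Notation q := (Pt x).
Local Notation a := (A.@[q]).
Local Notation b := (B.@[q]).
Local Notation c := (Cc.@[q]).
Local Notation aX := ((A^`M(o0)).@[q]).
Local Notation aY := ((A^`M(o1)).@[q]).
Local Notation aW := ((A^`M(o2)).@[q]).
Local Notation bX := ((B^`M(o0)).@[q]).
Local Notation bY := ((B^`M(o1)).@[q]).
Local Notation bW := ((B^`M(o2)).@[q]).
Local Notation cX := ((Cc^`M(o0)).@[q]).
Local Notation cY := ((Cc^`M(o1)).@[q]).
Local Notation cW := ((Cc^`M(o2)).@[q]).
Local Notation Xv := (x o0).
Local Notation Yv := (x o1).
Local Notation w := (x o2).

Lemma fh : Xv * a + Yv * b + c = 0.
Proof. by move: (congr1 (meval q) hEuler); rewrite !(mevalD, mevalM, evX) Pt0 Pt1 meval0. Qed.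
Lemma fX : a + Xv * aX + Yv * bX + cX = 0.
Proof. by move: (congr1 (meval q) hXp); rewrite !(mevalD, mevalM, evX) Pt0 Pt1 meval0. Qed.
Lemma fY : Xv * aY + b + Yv * bY + cY = 0.
Proof. by move: (congr1 (meval q) hYp); rewrite !(mevalD, mevalM, evX) Pt0 Pt1 meval0. Qed.
Lemma fA : Xv * aX + Yv * aY + w * w ^+ g * aW = a *+ d.
Proof. by move: (congr1 (meval q) eAp); rewrite !(mevalD, mevalM, mevalMn, evX) Pt0 Pt1 Pt2 exprS. Qed.
Lemma fB : Xv * bX + Yv * bY + w * w ^+ g * bW = b *+ d.
Proof. by move: (congr1 (meval q) eBp); rewrite !(mevalD, mevalM, mevalMn, evX) Pt0 Pt1 Pt2 exprS. Qed.
Lemma fC : Xv * cX + Yv * cY + w * w ^+ g * cW = c *+ d.+1.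
Proof. by move: (congr1 (meval q) eCp); rewrite !(mevalD, mevalM, mevalMn, evX) Pt0 Pt1 Pt2 exprS. Qed.
Lemma z0 : cY *+ g.+1 - b - w * bW * w ^+ g *+ g.+1 = 0.
Proof. by move: (hz o0); rewrite Zv0 LD0 !(mevalB, mevalMn, mevalM, compP, evX, X2n). Qed.
Lemma z1 : cX *+ g.+1 - a - w * aW * w ^+ g *+ g.+1 = 0.
Proof. by move: (hz o1); rewrite Zv1 LD1 mevalN !(mevalB, mevalMn, mevalM, compP, evX, X2n) => /eqP; rewrite oppr_eq0 => /eqP. Qed.
Lemma z2 : w * bX - w * aY = 0.
Proof. by move: (hz o2); rewrite Zv2 LD2 !(mevalB, mevalMn, mevalM, compP, evX, X2n). Qed.


Lemma om0 : omG A B Cc o0 = X2 * A. Proof. by rewrite /omG v0. Qed.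
Lemma om1 : omG A B Cc o1 = X2 * B. Proof. by rewrite /omG v1. Qed.
Lemma om2 : omG A B Cc o2 = Cc. Proof. by rewrite /omG v2. Qed.

Lemma scv e p (k : 'I_3) : p \is e.-homog ->
  p.@[fun i => q i / q k] = (q k)^-1 ^+ e * p.@[q].
Proof.
move=> hp; rewrite -(@scale_eval _ _ _ _ _ _ hp); apply: meval_eq => i.
by rewrite mulrC.
Qed.

Lemma singq : q o2 * a = 0 -> q o2 * b = 0 -> c = 0 -> nonzero_pt q -> singG A B Cc q.
Proof.
move=> h0 h1 h2 nz; split => //; apply: ord_cases;
  by rewrite ?om0 ?om1 ?om2 ?mevalM ?evX.
Qed.

Lemma Gnz n : (n.+1)%:R != 0 :> C. Proof. by rewrite pnatr_eq0. Qed.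

Lemma case1 : w != 0 -> False.
Proof.
move=> hw.
have hu : q o2 != 0 by rewrite Pt2 expf_neq0.
have e : bX = aY.
  by move: z2; rewrite -mulrBr => /eqP; rewrite mulf_eq0 (negbTE hw) subr_eq0 => /eqP.
have fA0 : Xv * aX + Yv * aY + w * w ^+ g * aW - a *+ d = 0 by rewrite fA subrr.
have fB0 : Xv * bX + Yv * bY + w * w ^+ g * bW - b *+ d = 0 by rewrite fB subrr.
have a0 : a = 0.
  have H : a * (g.+1 + g.+1 * d).+1%:R = (a + Xv * aX + Yv * bX + cX) *+ g.+1
    - (cX *+ g.+1 - a - w * aW * w ^+ g *+ g.+1)
    - (Xv * aX + Yv * aY + w * w ^+ g * aW - a *+ d) *+ g.+1
    - Yv *+ g.+1 * (bX - aY) by ring.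
  move: H; rewrite fX z1 fA0 e subrr !(mul0rn, mulr0, subr0) => /eqP.
  by rewrite mulf_eq0 (negbTE (Gnz _)) orbF => /eqP.
have b0 : b = 0.
  have H : b * (g.+1 + g.+1 * d).+1%:R = (Xv * aY + b + Yv * bY + cY) *+ g.+1
    - (cY *+ g.+1 - b - w * bW * w ^+ g *+ g.+1)
    - (Xv * bX + Yv * bY + w * w ^+ g * bW - b *+ d) *+ g.+1
    - Xv *+ g.+1 * (aY - bX) by ring.
  move: H; rewrite fY z0 fB0 e subrr !(mul0rn, mulr0, subr0) => /eqP.
  by rewrite mulf_eq0 (negbTE (Gnz _)) orbF => /eqP.
have c0 : c = 0 by move: fh; rewrite a0 b0 !mulr0 !add0r.
have sq : singG A B Cc q by apply: singq; rewrite ?a0 ?b0 ?mulr0 //; exists o2.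
have ht : (lin_part (omG A B Cc) o2 q) 0 0 + (lin_part (omG A B Cc) o2 q) 1 1 = 0; last first.
  exact: (@trace0_not _ _ ht (hsing _ sq _ hu)).
rewrite /lin_part !mxE n00 n10 ca2 cb2 om0 om1 !mderivM !mderivXU e20 e21.
rewrite !mul0r !add0r !mevalM -mulrBr.
have hh : (B^`M(o0) - A^`M(o1)) \is (d.-1).-homog.
  by apply: rpredB; apply: mderiv_homog.
by rewrite -mevalB (@scv _ _ o2 hh) mevalB e subrr !mulr0.
Qed.

Lemma case2 : w = 0 -> Xv = 0 /\ Yv = 0.
Proof.
move=> hw.
have hu : q o2 = 0 by rewrite Pt2 hw expr0n.
have z0' := z0; have z1' := z1; have fC' := fC.
rewrite hw !mul0r mul0rn subr0 in z0'.
rewrite hw !mul0r mul0rn subr0 in z1'.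
rewrite hw !mul0r addr0 in fC'.
have hb : b = cY *+ g.+1 by apply/esym/eqP; rewrite -subr_eq0; apply/eqP.
have ha : a = cX *+ g.+1 by apply/esym/eqP; rewrite -subr_eq0; apply/eqP.
have fC0 : Xv * cX + Yv * cY - c *+ d.+1 = 0 by rewrite fC' subrr.
have c0 : c = 0.
  have H : c * (g.+1 * d.+1).+1%:R = (Xv * a + Yv * b + c) + Xv * (cX *+ g.+1 - a)
    + Yv * (cY *+ g.+1 - b) - (Xv * cX + Yv * cY - c *+ d.+1) *+ g.+1 by ring.
  move: H; rewrite fh z0' z1' fC0 !(mul0rn, mulr0, subr0, addr0) => /eqP.
  by rewrite mulf_eq0 (negbTE (Gnz _)) orbF => /eqP.
case: (eqVneq Xv 0) => hX.
  case: (eqVneq Yv 0) => hY; first by [].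
  exfalso.
  have hq : q o1 != 0 by rewrite Pt1.
  have sq : singG A B Cc q.
    by apply: singq; rewrite ?hu ?mul0r //; exists o1.
  have h10 : (lin_part (omG A B Cc) o1 q) 1 0 = 0.
    rewrite /lin_part !mxE n10 n00 ?ca1 ?cb1 om0 mderivM mderivXU e20 mul0r add0r mevalM evX.
    by rewrite hu !mul0r oppr0.
  have h11 : (lin_part (omG A B Cc) o1 q) 1 1 = - ((g.+1)%:R * (lin_part (omG A B Cc) o1 q) 0 0).
    rewrite /lin_part !mxE n10 n00 ?ca1 ?cb1 ?om0 ?om2 mderivM mderivXU eqxx mevalD !mevalM evX hu.
    rewrite (@scv _ _ o1 hA) (@scv _ _ o1 (@mderiv_homog _ _ _ _ o0 hC)) ha /=.
    rewrite meval1; ring.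
  exact: (@tri_not _ _ _ h10 h11 (hsing _ sq _ hq)).
exfalso.
have hq : q o0 != 0 by rewrite Pt0.
have sq : singG A B Cc q.
  by apply: singq; rewrite ?hu ?mul0r //; exists o0.
have h10 : (lin_part (omG A B Cc) o0 q) 1 0 = 0.
  rewrite /lin_part !mxE n10 n00 ?ca0 ?cb0 om1 mderivM mderivXU e21 mul0r add0r mevalM evX.
  by rewrite hu !mul0r oppr0.
have h11 : (lin_part (omG A B Cc) o0 q) 1 1 = - ((g.+1)%:R * (lin_part (omG A B Cc) o0 q) 0 0).
  rewrite /lin_part !mxE n10 n00 ?ca0 ?cb0 ?om1 ?om2 mderivM mderivXU eqxx mevalD !mevalM evX hu.
  rewrite (@scv _ _ o0 hB) (@scv _ _ o0 (@mderiv_homog _ _ _ _ o1 hC)) hb /=.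
  rewrite meval1; ring.
exact: (@tri_not _ _ _ h10 h11 (hsing _ sq _ hq)).
Qed.

Lemma xzero : forall i, x i = 0.
Proof.
case: (eqVneq w 0) => hw; last by case: (case1 hw).
have [h0 h1] := case2 hw.
by apply: ord_cases.
Qed.
End Iso.

Theorem final : qh_singularity eta.
Proof.
split; first exact: integ.
exists Zv; split.
- exact: contrZ.
- split; first by move=> i; case: (ord2Zv i) => ->.
  exists 1; split; first exact: ltr01.
  by move=> x _ hz; exact: (@xzero x hz).
- exact: DZ0_eig.
Qed.
End Main.


(* C = R[i] with R a realType, i.e. the complex numbers.
   X, Y, Z on P^2 are the variables 'X_0, 'X_1, 'X_2 of {mpoly R[i][3]};
   P^3 has homogeneous coordinates indexed by 'I_4. *)
Theorem lemma5p6
  (R : realType)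
  (* the map f = (F0 : F1 : F2^gamma) : P^3 --> P^2 *)
  (F0 F1 F2 : {mpoly R[i][4]}) (gamma nu e2 : nat)
  (hgamma : (2 <= gamma)%N) (hnu : (2 <= nu)%N) (hnu_e2 : nu = (gamma * e2)%N)
  (hF0 : F0 \is nu.-homog) (hF1 : F1 \is nu.-homog) (hF2 : F2 \is e2.-homog)
  (hF0nz : F0 != 0) (hF1nz : F1 != 0) (hF2nz : F2 != 0)
  (hFcop : forall H : {mpoly R[i][4]},
      mdvd H F0 -> mdvd H F1 -> mdvd H F2 -> mconst H)
  (* genericity: dF0/\dF1/\dF2 <> 0 on f~^{-1}(0) \ {0} *)
  (hgen : forall w : 'I_4 -> R[i], nonzero_pt w ->
      (forall k, ftilde gamma F0 F1 F2 w k = 0) -> row_free (jacF F0 F1 F2 w))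
  (* the foliation G of degree d given by ZA dX + ZB dY + C dZ, XA + YB + C = 0 *)
  (d : nat) (hd : (2 <= d)%N) (A B Cc : {mpoly R[i][3]})
  (hA : A \is d.-homog) (hB : B \is d.-homog) (hC : Cc \is d.+1.-homog)
  (hEuler : 'X_(inord 0) * A + 'X_(inord 1) * B + Cc = 0)
  (hsat : forall H : {mpoly R[i][3]},
      (forall k, mdvd H (omG A B Cc k)) -> mconst H)
  (* the line Z = 0 is invariant and is the only invariant algebraic curve *)
  (hZinv : invariant_curve (omG A B Cc) 'X_(inord 2))
  (honly : forall F : {mpoly R[i][3]}, (exists e, F \is e.-homog) ->
      mirreducible F -> invariant_curve (omG A B Cc) F ->
      exists c : R[i], c != 0 /\ F = c *: 'X_(inord 2))
  (* all singularities nondegenerate with nonreal characteristic numbers *)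
  (hsing : forall q : 'I_3 -> R[i], singG A B Cc q ->
      forall k : 'I_3, q k != 0 -> nondeg_nonreal (lin_part (omG A B Cc) k q))
  (* Sing(G) does not meet Y_2(f) *)
  (hY2 : forall w : 'I_4 -> R[i], nonzero_pt (ftilde gamma F0 F1 F2 w) ->
      ~~ row_free (jacF F0 F1 F2 w) -> ~ singG A B Cc (ftilde gamma F0 F1 F2 w))
  (* p = [w] in I(f) *)
  (w : 'I_4 -> R[i]) (hw : nonzero_pt w)
  (hp : forall k, ftilde gamma F0 F1 F2 w k = 0) :
  (* in the local chart at p, p is the origin and F is given by eta *)
  qh_singularity (eta_form gamma A B Cc).
Proof.
have [g hg] : exists g, gamma = g.+1 by case: gamma hgamma {hnu_e2 hgen hY2 hp} => [//|g] _; exists g.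
rewrite hg.
exact: (@final _ g A B Cc d hA hB hC hEuler hd hsing).
Qed.
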